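(* Let $\triangle ABC$ be an obtuse triangle circumscribed about an ellipse with semi-axes $a>b>0$ whose center coincides with the circumcenter of $\triangle ABC$. Then the radius of the polar circle of $\triangle ABC$ equals $\sqrt{2ab}$. Equivalently, the area of the polar circle is twice the area of the ellipse.
   Context: A triangle is circumscribed about a conic if each of its three sidelines is tangent to the conic. For an obtuse triangle $ABC$ with orthocenter $H$, let $H_A$ be the foot of the perpendicular from $A$ to line $BC$. The polar circle of $\triangle ABC$ is the circle with center $H$ and radius $r_p$ with $r_p^2=|AH|\,|HH_A|$. This value does not depend on the chosen vertex. *)

(* Defs.v *)
From HB Require Import structures.
From mathcomp Require Import all_boot all_order all_algebra.
Set Implicit Arguments. Unset Strict Implicit. Unset Printing Implicit Defensive.
Import Order.TTheory GRing.Theory Num.Theory.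
Local Open Scope ring_scope.

Section Plane.
Variable R : rcfType.

Definition point := (R * R)%type.

Definition dot (u v : point) : R := u.1 * v.1 + u.2 * v.2.
Definition vsub (P Q : point) : point := (P.1 - Q.1, P.2 - Q.2).
Definition dist (P Q : point) : R := Num.sqrt (dot (vsub P Q) (vsub P Q)).

Definition on_line (P Q X : point) : Prop :=
  exists t : R, X = (P.1 + t * (Q.1 - P.1), P.2 + t * (Q.2 - P.2)).

Definition collinear (A B C : point) : Prop :=
  (B.1 - A.1) * (C.2 - A.2) - (B.2 - A.2) * (C.1 - A.1) = 0.

Definition obtuse (A B C : point) : Prop :=
  dot (vsub B A) (vsub C A) < 0 \/ dot (vsub A B) (vsub C B) < 0 \/
  dot (vsub A C) (vsub B C) < 0.

(* Ellipse with center O, unit major-axis direction u, semi-axes a, b *)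
Definition on_ellipse (O u : point) (a b : R) (X : point) : Prop :=
  let d := vsub X O in
  (dot d u) ^+ 2 / a ^+ 2 + (u.1 * d.2 - u.2 * d.1) ^+ 2 / b ^+ 2 = 1.

Definition tangent_line (P Q O u : point) (a b : R) : Prop :=
  exists! X : point, on_line P Q X /\ on_ellipse O u a b X.

Definition circumscribed_about (A B C O u : point) (a b : R) : Prop :=
  tangent_line A B O u a b /\ tangent_line B C O u a b /\ tangent_line C A O u a b.

Definition is_circumcenter (A B C O : point) : Prop :=
  dist O A = dist O B /\ dist O B = dist O C.

Definition is_orthocenter (A B C H : point) : Prop :=
  dot (vsub H A) (vsub C B) = 0 /\ dot (vsub H B) (vsub C A) = 0 /\
  dot (vsub H C) (vsub B A) = 0.

Definition is_foot (A B C HA : point) : Prop :=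
  on_line B C HA /\ dot (vsub A HA) (vsub C B) = 0.

(* Radius of the polar circle: r_p^2 = |AH| |H H_A| *)
Definition polar_radius (A H HA : point) : R :=
  Num.sqrt (dist A H * dist H HA).

End Plane.

(* Main.v *)
Require Import Defs.
From mathcomp Require Import all_boot all_order all_algebra.
From mathcomp Require Import ring lra.
Import Order.TTheory GRing.Theory Num.Theory.
Local Open Scope ring_scope.

Section Core0.
Variable R : rcfType.

Lemma mul0_r {x y : R} : x * y = 0 -> x != 0 -> y = 0.
Proof. by move/eqP; rewrite mulf_eq0 => /orP[/eqP->|/eqP->//]; rewrite eqxx. Qed.

Lemma mul0_l {x y : R} : x * y = 0 -> y != 0 -> x = 0.
Proof. by rewrite mulrC; apply: mul0_r. Qed.

Lemma sq2_eq0 {x y : R} : x^+2 + y^+2 = 0 -> x = 0 /\ y = 0.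
Proof.
by move/eqP; rewrite paddr_eq0 ?sqr_ge0 // !sqrf_eq0 => /andP[/eqP -> /eqP ->].
Qed.

Lemma nz_of_cross (u1 u2 v1 v2 : R) : u1*v2 - u2*v1 != 0 -> u1^+2+u2^+2 != 0.
Proof.
move=> h; apply/eqP => /sq2_eq0 [h1 h2]; move: h; rewrite h1 h2 !mul0r subrr eqxx //.
Qed.

Lemma tanE (a b r xi yi xj yj : R) :
  xi^+2+yi^+2 = r -> xj^+2+yj^+2 = r -> (xj-xi)^+2+(yj-yi)^+2 != 0 ->
  a^+2*(yj-yi)^+2 + b^+2*(xj-xi)^+2 = (xi*yj - xj*yi)^+2 ->
  (a^+2-b^+2-r)*xi*xj - (a^+2-b^+2+r)*yi*yj = r*(r-a^+2-b^+2).
Proof.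
move=> hi hj hd hT; subst r.
have e : (xi^+2+yi^+2 - (xi*xj+yi*yj)) *
   ((a^+2-b^+2-(xi^+2+yi^+2))*xi*xj - (a^+2-b^+2+(xi^+2+yi^+2))*yi*yj
     - (xi^+2+yi^+2)*((xi^+2+yi^+2)-a^+2-b^+2))
  = (xi^+2+yi^+2) * (a^+2*(yj-yi)^+2 + b^+2*(xj-xi)^+2 - (xi*yj - xj*yi)^+2)
    - (a^+2*xi^+2 + b^+2*yi^+2 - (xi^+2+yi^+2)^+2) * (xj^+2+yj^+2 - (xi^+2+yi^+2)).
  by ring.
rewrite hT hj !subrr ?mulr0 ?mul0r ?subr0 in e.
apply: subr0_eq; apply: (mul0_r e).
apply: contra hd => /eqP h0; apply/eqP.
transitivity (2 * (xi^+2+yi^+2 - (xi*xj+yi*yj)) + (xj^+2+yj^+2 - (xi^+2+yi^+2))).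
  by ring.
by rewrite h0 hj !subrr mulr0 addr0.
Qed.
End Core0.
Arguments mul0_r {R x y}.
Arguments mul0_l {R x y}.
Arguments sq2_eq0 {R x y}.
Arguments nz_of_cross {R u1 u2 v1 v2}.

Section Poly.
Variable R : rcfType.
Variables a b r X Y : R.
Local Notation p := (a^+2-b^+2-r).
Local Notation q := (a^+2-b^+2+r).
Local Notation c := (r*(r-a^+2-b^+2)).
Local Notation NN := (p^+2*X+q^+2*Y).
Local Notation g1 := (p*X - q*Y).
Local Notation AA := (a^+2-b^+2).
Local Notation FF := ((r-(a+b)^+2)*(r-(a-b)^+2)).

Lemma polyPhi : X = r - Y ->
  p*(4*c^+2*(p^+2*X) - (q^+2*Y)*(4*r*NN-4*c^+2)) - q*(4*c^+2*(q^+2*Y) - (p^+2*X)*(4*r*NN-4*c^+2)) - 4*c*NN^+2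
  = 4*r^+2*FF*(4*AA*Y+(r-AA)^+2)*(g1-c).
Proof. move=> ->; ring. Qed.

Lemma polyG : X = r - Y ->
  c^+2*(g1+c)^+2 - a^+2*b^+2*NN^+2 = FF*( 4%:R*b^+4*r^+4 - a^+2*b^+2*r^+4 + 8%:R*a^+2*b^+2*r^+3*Y - 8%:R*b^+4*r^+3*Y - 6%:R*a^+2*b^+4*r^+3 + 2%:R*a^+4*b^+2*r^+3 + 4%:R*a^+4*r^+2*Y^+2 - 8%:R*a^+2*b^+2*r^+2*Y^+2 + 4%:R*b^+4*r^+2*Y^+2 - 8%:R*a^+4*b^+2*r^+2*Y + 2%:R*a^+4*b^+4*r^+2 - a^+2*b^+6*r^+2 - a^+6*b^+2*r^+2 + 8%:R*a^+2*b^+4*r^+2*Y).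
Proof. move=> ->; ring. Qed.
End Poly.


Section Vieta.
Variable R : rcfType.
Lemma vieta (n1 n2 c s1 s2 w1 w2 r : R) :
  n1*w1+n2*w2 = 0 -> n1*s1+n2*s2 = 2*c -> s1*w1+s2*w2 = 0 -> w1^+2+w2^+2 != 0 ->
  s1^+2+s2^+2+(w1^+2+w2^+2) = 4*r -> n1^+2+n2^+2 != 0 ->
  [/\ (n1^+2+n2^+2)*s1 = 2*c*n1, (n1^+2+n2^+2)*s2 = 2*c*n2,
      (n1^+2+n2^+2)*(s1^+2+s2^+2) = 4*c^+2,
      (n1^+2+n2^+2)^+2*(s1^+2-w1^+2) = 4*c^+2*n1^+2 - n2^+2*(4*r*(n1^+2+n2^+2)-4*c^+2) &
      (n1^+2+n2^+2)^+2*(s2^+2-w2^+2) = 4*c^+2*n2^+2 - n1^+2*(4*r*(n1^+2+n2^+2)-4*c^+2)].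
Proof.
move=> hnw hns hsw hw0 H4 hN.
have hcr2 : n1*s2 - n2*s1 = 0.
  apply: (mul0_r _ hw0).
  transitivity (w1*(s2*(n1*w1+n2*w2) - n2*(s1*w1+s2*w2)) + w2*(n1*(s1*w1+s2*w2) - s1*(n1*w1+n2*w2))); first by ring.
  by rewrite hnw hsw; ring.
have D1 : (n1^+2+n2^+2)*s1 - 2*c*n1 = 0.
  transitivity (n1*(n1*s1+n2*s2 - 2*c) - n2*(n1*s2 - n2*s1)); first by ring.
  by rewrite hns hcr2; ring.
have D2 : (n1^+2+n2^+2)*s2 - 2*c*n2 = 0.
  transitivity (n2*(n1*s1+n2*s2 - 2*c) + n1*(n1*s2 - n2*s1)); first by ring.
  by rewrite hns hcr2; ring.
have D3 : (n1^+2+n2^+2)*w1 + n2*(n1*w2 - n2*w1) = 0.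
  transitivity (n1*(n1*w1+n2*w2)); first by ring.
  by rewrite hnw; ring.
have D4 : (n1^+2+n2^+2)*w2 - n1*(n1*w2 - n2*w1) = 0.
  transitivity (n2*(n1*w1+n2*w2)); first by ring.
  by rewrite hnw; ring.
have DS : (n1^+2+n2^+2)*(s1^+2+s2^+2) - 4*c^+2 = 0.
  apply: (mul0_r _ hN).
  transitivity (((n1^+2+n2^+2)*s1 - 2*c*n1)*((n1^+2+n2^+2)*s1+2*c*n1) + ((n1^+2+n2^+2)*s2 - 2*c*n2)*((n1^+2+n2^+2)*s2+2*c*n2)); first by ring.
  by rewrite D1 D2; ring.
have DK : (n1*w2 - n2*w1)^+2 - (4*r*(n1^+2+n2^+2) - 4*c^+2) = 0.
  transitivity ((n1^+2+n2^+2)*(s1^+2+s2^+2+(w1^+2+w2^+2) - 4*r) - ((n1^+2+n2^+2)*(s1^+2+s2^+2) - 4*c^+2) - (n1*w1+n2*w2)^+2); first by ring.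
  by rewrite H4 DS hnw; ring.
split; apply: subr0_eq => //.
- transitivity (((n1^+2+n2^+2)*s1 - 2*c*n1)*((n1^+2+n2^+2)*s1+2*c*n1) - ((n1^+2+n2^+2)*w1 + n2*(n1*w2 - n2*w1))*((n1^+2+n2^+2)*w1 - n2*(n1*w2 - n2*w1)) - n2^+2*((n1*w2 - n2*w1)^+2 - (4*r*(n1^+2+n2^+2) - 4*c^+2))); first by ring.
  by rewrite D1 D3 DK; ring.
- transitivity (((n1^+2+n2^+2)*s2 - 2*c*n2)*((n1^+2+n2^+2)*s2+2*c*n2) - ((n1^+2+n2^+2)*w2 - n1*(n1*w2 - n2*w1))*((n1^+2+n2^+2)*w2 + n1*(n1*w2 - n2*w1)) - n1^+2*((n1*w2 - n2*w1)^+2 - (4*r*(n1^+2+n2^+2) - 4*c^+2))); first by ring.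
  by rewrite D2 D4 DK; ring.
Qed.
End Vieta.

Section Aux.
Variable R : rcfType.
Lemma aux_phi (p q c N x2 x3 y2 y3 : R) :
  p*(N^+2*((x2+x3)^+2-(x2-x3)^+2)) - q*(N^+2*((y2+y3)^+2-(y2-y3)^+2)) - 4*c*N^+2
  = 4*N^+2*(p*x2*x3 - q*y2*y3 - c).
Proof. ring. Qed.
Lemma aux_final (N Z C G a b : R) :
  N^+2*(Z^+2 - 4*a^+2*b^+2) = (N*Z - 2*C*G)*(N*Z + 2*C*G) + 4*(C^+2*G^+2 - a^+2*b^+2*N^+2).
Proof. ring. Qed.
Lemma aux_V (N n1 n2 c r x1 y1 x2 y2 x3 y3 : R) :
  4*(N*(r + (x1*x2+y1*y2) + (x2*x3+y2*y3) + (x3*x1+y3*y1)) - 2*c*((x1*n1+y1*n2)+c)) =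
  4*x1*(N*(x2+x3) - 2*c*n1) + 4*y1*(N*(y2+y3) - 2*c*n2) + 2*(N*((x2+x3)^+2+(y2+y3)^+2) - 4*c^+2)
  - N*((x2+x3)^+2+(y2+y3)^+2+((x2-x3)^+2+(y2-y3)^+2) - 4*r).
Proof. ring. Qed.
End Aux.


Lemma posA (R : rcfType) (a b : R) : 0 < b -> b < a -> 0 < a^+2 - b^+2.
Proof. move=> hb hab; nra. Qed.

Section Core1.
Variable R : rcfType.
Variables a b r x1 y1 x2 y2 x3 y3 : R.
Local Notation p := (a^+2-b^+2-r).
Local Notation q := (a^+2-b^+2+r).
Local Notation c := (r*(r-a^+2-b^+2)).
Local Notation n1 := (p*x1).
Local Notation n2 := (-(q*y1)).
Local Notation NN := (n1^+2+n2^+2).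
Local Notation s1 := (x2+x3).
Local Notation s2 := (y2+y3).
Local Notation w1 := (x2-x3).
Local Notation w2 := (y2-y3).
Local Notation g1 := (p*x1^+2 - q*y1^+2).
Local Notation AA := (a^+2-b^+2).
Local Notation FF := ((r-(a+b)^+2)*(r-(a-b)^+2)).
Local Notation E12l := (p*x1*x2 - q*y1*y2).
Local Notation E31l := (p*x3*x1 - q*y3*y1).
Local Notation E23l := (p*x2*x3 - q*y2*y3).
Local Notation Zs := (r + (x1*x2+y1*y2) + (x2*x3+y2*y3) + (x3*x1+y3*y1)).

Lemma core_main : 0 < b -> b < a -> x1^+2+y1^+2 = r ->
  x2^+2+y2^+2 = r -> x3^+2+y3^+2 = r ->
  (x2-x1)*(y3-y1) - (y2-y1)*(x3-x1) != 0 ->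
  a^+2*(y2-y1)^+2 + b^+2*(x2-x1)^+2 = (x1*y2 - x2*y1)^+2 ->
  a^+2*(y3-y2)^+2 + b^+2*(x3-x2)^+2 = (x2*y3 - x3*y2)^+2 ->
  a^+2*(y1-y3)^+2 + b^+2*(x1-x3)^+2 = (x3*y1 - x1*y3)^+2 ->
  Zs^+2 = 4*a^+2*b^+2.
Proof.
move=> hb hab h1 h2 h3 hcr T12 T23 T31.
have d12 : (x2-x1)^+2+(y2-y1)^+2 != 0.
  by apply: (@nz_of_cross _ _ _ (x3-x1) (y3-y1)).
have d23 : (x3-x2)^+2+(y3-y2)^+2 != 0.
  apply: (@nz_of_cross _ _ _ (x1-x2) (y1-y2)).
  have -> : (x3 - x2) * (y1 - y2) - (y3 - y2) * (x1 - x2) = 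
     (x2-x1)*(y3-y1) - (y2-y1)*(x3-x1) by ring.
  done.
have d31 : (x1-x3)^+2+(y1-y3)^+2 != 0.
  apply: (@nz_of_cross _ _ _ (x2-x3) (y2-y3)).
  have -> : (x1 - x3) * (y2 - y3) - (y1 - y3) * (x2 - x3) = 
     (x2-x1)*(y3-y1) - (y2-y1)*(x3-x1) by ring.
  done.
have E12 := @tanE R a b _ _ _ _ _ h1 h2 d12 T12.
have E23 := @tanE R a b _ _ _ _ _ h2 h3 d23 T23.
have E31 := @tanE R a b _ _ _ _ _ h3 h1 d31 T31.
have hb0 : b != 0 by rewrite gt_eqF.
have ha0 : a != 0 by rewrite gt_eqF // (lt_trans hb hab).
have hr0 : r != 0.
  apply/eqP => r0; rewrite r0 in h1 h2 h3.
  move: h1 h2 h3 => /sq2_eq0 [hx1 hy1] /sq2_eq0 [hx2 hy2] /sq2_eq0 [hx3 hy3].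
  by move: hcr; rewrite hx1 hy1 hx2 hy2 hx3 hy3 !subrr ?mul0r ?subrr eqxx.
have h2b : 2*b^+2 != 0 by rewrite mulf_neq0 ?pnatr_eq0 ?expf_neq0.
have h2a : 2*a^+2 != 0 by rewrite mulf_neq0 ?pnatr_eq0 ?expf_neq0.
have hN : NN != 0.
  apply/eqP => /sq2_eq0 [hn1 hn2].
  have hq : q*y1 = 0 by apply/eqP; rewrite -oppr_eq0 hn2.
  have hc : c = 0 by rewrite -E12 hn1 hq !mul0r subrr.
  have hr2 : r - a^+2 - b^+2 = 0 := mul0_r hc hr0.
  have hx : x1 = 0.
    apply: (mul0_r _ h2b).
    transitivity (-(p*x1) - (r-a^+2-b^+2)*x1); first by ring.
    by rewrite hn1 hr2; ring.
  have hy : y1 = 0.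
    apply: (mul0_r _ h2a).
    transitivity (q*y1 - (r-a^+2-b^+2)*y1); first by ring.
    by rewrite hq hr2; ring.
  by move: hr0; rewrite -h1 hx hy expr0n /= addr0 eqxx.
have hg : g1 - c != 0.
  apply/eqP => hg.
  have : NN * ((x2-x1)*(y3-y1) - (y2-y1)*(x3-x1)) = 0.
    transitivity (n1*((y3-y1)*((E12l - c) - (g1 - c)) - (y2-y1)*((E31l - c) - (g1-c)))
       + n2*((x2-x1)*((E31l-c)-(g1-c)) - (x3-x1)*((E12l-c)-(g1-c)))).
      by ring.
    by rewrite E12 E31 hg; ring.
  by move/(mul0_r)/(_ hN)/eqP; rewrite (negbTE hcr).
have hA : 0 < AA.
  exact: posA hb hab.
have hY : 4*AA*y1^+2 + (r-AA)^+2 != 0.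
  have p1 : 0 <= 4*AA*y1^+2 by rewrite mulr_ge0 ?sqr_ge0 // mulr_ge0 ?ler0n // ltW.
  apply/eqP => /eqP; rewrite paddr_eq0 ?sqr_ge0 //.
  rewrite sqrf_eq0 => /andP[/eqP h0 /eqP hrA].
  have hy1 : y1 = 0.
    apply/eqP; rewrite -sqrf_eq0; apply/eqP; apply: (mul0_r h0).
    by rewrite mulf_neq0 ?pnatr_eq0 // gt_eqF.
  have hqy : q*y1 = 0 by rewrite hy1 mulr0.
  have : r*(2*b^+2) = 0.
    transitivity ((E12l - c) + (r-AA)*x1*x2 + q*y1*y2 + r*(r-AA)); first by ring.
    by rewrite E12 hrA hqy; ring.
  by move/eqP; rewrite mulf_eq0 (negbTE hr0) (negbTE h2b).
have hnw : n1*w1+n2*w2 = 0.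
  transitivity ((E12l - c) - (E31l - c)); first by ring.
  by rewrite E12 E31; ring.
have hns : n1*s1 + n2*s2 = 2*c.
  transitivity ((E12l - c) + (E31l - c) + 2*c); first by ring.
  by rewrite E12 E31; ring.
have hsw : s1*w1 + s2*w2 = 0.
  transitivity ((x2^+2+y2^+2 - r) - (x3^+2+y3^+2 - r)); first by ring.
  by rewrite h2 h3; ring.
have hw0 : w1^+2 + w2^+2 != 0.
  by have -> : w1^+2+w2^+2 = (x3-x2)^+2+(y3-y2)^+2 by ring.
have H4 : s1^+2+s2^+2+(w1^+2+w2^+2) = 4*r.
  apply: subr0_eq.
  transitivity (2*(x2^+2+y2^+2 - r) + 2*(x3^+2+y3^+2 - r)); first by ring.
  by rewrite h2 h3; ring.
have [V1 V2 VS VX VY] := @vieta R _ _ _ _ _ _ _ _ hnw hns hsw hw0 H4 hN.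
have hn1 : n1^+2 = p^+2*x1^+2 by rewrite exprMn.
have hn2 : n2^+2 = q^+2*y1^+2 by rewrite sqrrN exprMn.
have hx1 : x1^+2 = r - y1^+2 by rewrite -h1 addrK.
have ePhi : p*(4*c^+2*n1^+2 - n2^+2*(4*r*NN-4*c^+2)) - q*(4*c^+2*n2^+2 - n1^+2*(4*r*NN-4*c^+2)) - 4*c*NN^+2 = 0.
  by rewrite -VX -VY aux_phi E23 subrr mulr0.
rewrite hn1 hn2 in ePhi.
rewrite (@polyPhi R a b r _ _ hx1) in ePhi.
have hF : FF = 0.
  have e1 := mul0_l ePhi hg.
  have e2 := mul0_l e1 hY.
  apply: (mul0_r e2).
  by rewrite mulf_neq0 ?pnatr_eq0 ?expf_neq0.
have hG := @polyG R a b r _ _ hx1.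
rewrite hF mul0r -hn1 -hn2 in hG.
have hg1 : g1 = x1*n1 + y1*n2 by ring.
have hV : NN*Zs - 2*c*(g1+c) = 0.
  apply: (mul0_r (x:=4)); last by rewrite pnatr_eq0.
  rewrite hg1 aux_V V1 V2 VS H4 !subrr; ring.
apply: subr0_eq.
apply: (mul0_r (x:=NN^+2)); last by rewrite expf_neq0.
by rewrite (@aux_final R _ _ c (g1+c)) hV hG mul0r mulr0 addr0.
Qed.
End Core1.
Arguments core_main {R a b r x1 y1 x2 y2 x3 y3}.


Section Geo.
Variable R : rcfType.

Lemma ellE (a b A B : R) : a != 0 -> b != 0 ->
  (A / a^+2 + B / b^+2 = 1) <-> (b^+2*A + a^+2*B = a^+2*b^+2).
Proof.
move=> ha hb; split=> h.
- have -> : b^+2*A + a^+2*B = a^+2*b^+2*(A / a^+2 + B / b^+2).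
    by field; rewrite ?ha ?hb.
  by rewrite h mulr1.
- have -> : A / a^+2 + B / b^+2 = (b^+2*A + a^+2*B) / (a^+2*b^+2).
    by field; rewrite ?ha ?hb.
  by rewrite h divff // mulf_neq0 ?expf_neq0.
Qed.

Lemma disc_alg (a b xP yP dx dy t : R) : a != 0 -> b != 0 ->
  b^+2*dx^+2 + a^+2*dy^+2 != 0 ->
  (forall s, b^+2*(xP + s*dx)^+2 + a^+2*(yP+s*dy)^+2 = a^+2*b^+2 -> s = t) ->
  b^+2*(xP + t*dx)^+2 + a^+2*(yP+t*dy)^+2 = a^+2*b^+2 ->
  a^+2*dy^+2 + b^+2*dx^+2 = (xP*dy - yP*dx)^+2.
Proof.
move=> ha hb hal hU hE.
pose al := b^+2*dx^+2 + a^+2*dy^+2.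
pose be := 2*(b^+2*xP*dx + a^+2*yP*dy).
have hsym : al*((-(be/al) - t) + t) + be = 0.
  by rewrite subrK mulrN mulrC divfK // addNr.
have hE1 : b^+2*(xP + (-(be/al) - t)*dx)^+2 + a^+2*(yP+(-(be/al) - t)*dy)^+2 = a^+2*b^+2.
  rewrite -hE; apply: subr0_eq.
  transitivity (((-(be/al) - t) - t)*(al*((-(be/al) - t) + t) + be)).
    by rewrite /al /be; ring.
  by rewrite hsym mulr0.
have ht := hU _ hE1.
rewrite ht in hsym.
apply: subr0_eq.
apply: (mul0_r (x:=4*a^+2*b^+2)); last by rewrite !mulf_neq0 ?pnatr_eq0 ?expf_neq0.
transitivity ((al*(t+t)+be)^+2 - 4*al*(b^+2*(xP + t*dx)^+2 + a^+2*(yP+t*dy)^+2 - a^+2*b^+2)).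
  by rewrite /al /be; ring.
by rewrite hsym hE subrr expr0n /= mulr0 subr0.
Qed.

Definition cx (O u P : point R) := dot (vsub P O) u.
Definition cy (O u P : point R) := u.1 * (vsub P O).2 - u.2 * (vsub P O).1.

Lemma on_ellipse_coord (O u X : point R) a b :
  on_ellipse O u a b X = ((cx O u X)^+2 / a^+2 + (cy O u X)^+2/b^+2 = 1).
Proof. by []. Qed.

Lemma cx_line (O u P Q : point R) s :
  cx O u (P.1 + s*(Q.1-P.1), P.2 + s*(Q.2-P.2)) = cx O u P + s*(cx O u Q - cx O u P).
Proof. rewrite /cx /dot /vsub /=; ring. Qed.

Lemma cy_line (O u P Q : point R) s :
  cy O u (P.1 + s*(Q.1-P.1), P.2 + s*(Q.2-P.2)) = cy O u P + s*(cy O u Q - cy O u P).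
Proof. rewrite /cy /vsub /=; ring. Qed.

Lemma rot_norm (O u P Q : point R) :
  (cx O u Q - cx O u P)^+2 + (cy O u Q - cy O u P)^+2 = ((Q.1-P.1)^+2+(Q.2-P.2)^+2) * dot u u.
Proof. rewrite /cx /cy /dot /vsub /=; ring. Qed.

Lemma tangentT (O u P Q : point R) (a b : R) : a != 0 -> b != 0 -> dot u u = 1 ->
  (Q.1-P.1)^+2 + (Q.2-P.2)^+2 != 0 -> tangent_line P Q O u a b ->
  a^+2*(cy O u Q - cy O u P)^+2 + b^+2*(cx O u Q - cx O u P)^+2 =
  (cx O u P * cy O u Q - cx O u Q * cy O u P)^+2.
Proof.
move=> ha hb hu hPQ [X [[[t hX] hE] hU]].
subst X.
rewrite on_ellipse_coord cx_line cy_line ellE // in hE.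
have hd : (cx O u Q - cx O u P)^+2 + (cy O u Q - cy O u P)^+2 != 0.
  by rewrite rot_norm hu mulr1.
have hal : b^+2*(cx O u Q - cx O u P)^+2 + a^+2*(cy O u Q - cy O u P)^+2 != 0.
  apply: contra hd => /eqP h0.
  have : (b*(cx O u Q - cx O u P))^+2 + (a*(cy O u Q - cy O u P))^+2 = 0.
    by rewrite !exprMn.
  move/sq2_eq0 => [/eqP h1 /eqP h2].
  move: h1 h2; rewrite !mulf_eq0 (negbTE ha) (negbTE hb) /= => /eqP -> /eqP ->.
  by rewrite expr0n /= addr0.
have -> : cx O u P * cy O u Q - cx O u Q * cy O u P =
   cx O u P * (cy O u Q - cy O u P) - cy O u P * (cx O u Q - cx O u P) by ring.
apply: (disc_alg _ _ _ _ _ _ _ ha hb hal _ hE) => s hs.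
have : (P.1 + t*(Q.1-P.1), P.2 + t*(Q.2-P.2)) = (P.1 + s*(Q.1-P.1), P.2 + s*(Q.2-P.2)).
  apply: hU; split; first by exists s.
  by rewrite on_ellipse_coord cx_line cy_line ellE.
case=> e1 e2.
have h1 : (s - t)*(Q.1-P.1) = 0.
  by apply: subr0_eq; transitivity (P.1 + s*(Q.1-P.1) - (P.1 + t*(Q.1-P.1))); [ring|rewrite e1 subrr].
have h2 : (s - t)*(Q.2-P.2) = 0.
  by apply: subr0_eq; transitivity (P.2 + s*(Q.2-P.2) - (P.2 + t*(Q.2-P.2))); [ring|rewrite e2 subrr].
apply: subr0_eq; apply/eqP; rewrite -sqrf_eq0; apply/eqP.
apply: (mul0_l (y:=(Q.1-P.1)^+2 + (Q.2-P.2)^+2)) => //.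
transitivity (((s-t)*(Q.1-P.1))^+2 + ((s-t)*(Q.2-P.2))^+2); first by ring.
by rewrite h1 h2 expr0n /= addr0.
Qed.
Lemma dot_ge0 (v : point R) : 0 <= dot v v.
Proof. by rewrite /dot -!expr2 addr_ge0 ?sqr_ge0. Qed.

Lemma perp2 (U V W : point R) : dot W W != 0 -> dot U W = 0 -> dot V W = 0 ->
  dot U U * dot V V = (dot U V)^+2.
Proof.
case: U V W => [u1 u2] [v1 v2] [w1 w2]; rewrite /dot /= => hW hU hV.
have hc : u1*v2 - u2*v1 = 0.
  apply: (mul0_r (x:=w1*w1+w2*w2)) => //.
  transitivity (w1*(v2*(u1*w1+u2*w2) - u2*(v1*w1+v2*w2)) + w2*(u1*(v1*w1+v2*w2) - v1*(u1*w1+u2*w2))); first by ring.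
  by rewrite hU hV; ring.
apply: subr0_eq; transitivity ((u1*v2 - u2*v1)^+2); first by ring.
by rewrite hc expr0n.
Qed.

Lemma rot_sq (O u P : point R) :
  (cx O u P)^+2 + (cy O u P)^+2 = dot (vsub O P) (vsub O P) * dot u u.
Proof. rewrite /cx /cy /dot /vsub /=; ring. Qed.

Lemma rot_dot (O u P Q : point R) :
  cx O u P * cx O u Q + cy O u P * cy O u Q = dot (vsub P O) (vsub Q O) * dot u u.
Proof. rewrite /cx /cy /dot /vsub /=; ring. Qed.

Lemma rot_cross (O u A B C : point R) :
  (cx O u B - cx O u A)*(cy O u C - cy O u A) - (cy O u B - cy O u A)*(cx O u C - cx O u A)
  = ((B.1-A.1)*(C.2-A.2) - (B.2-A.2)*(C.1-A.1)) * dot u u.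
Proof. rewrite /cx /cy /dot /vsub /=; ring. Qed.
End Geo.
Arguments tangentT {R O u P Q a b}.
Arguments dot_ge0 {R}.
Arguments perp2 {R U V W}.
Arguments rot_sq {R}.
Arguments rot_dot {R}.
Arguments rot_cross {R}.
Arguments cx {R}.
Arguments cy {R}.


Theorem corollary5p16 (R : rcfType) (A B C O u H HA : point R) (a b : R) :
  ~ collinear A B C ->
  obtuse A B C ->
  0 < b -> b < a ->
  dot u u = 1 ->
  circumscribed_about A B C O u a b ->
  is_circumcenter A B C O ->
  is_orthocenter A B C H ->
  is_foot A B C HA ->
  polar_radius A H HA = Num.sqrt (2 * a * b).
Proof.
move=> hcol _ hb hab hu [tAB [tBC tCA]] [hOA hOB] [o1 [o2 _]] [[t hHA] hf].
have ha : 0 < a := lt_trans hb hab.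
have ha0 : a != 0 by rewrite gt_eqF.
have hb0 : b != 0 by rewrite gt_eqF.
have hcr : (B.1-A.1)*(C.2-A.2) - (B.2-A.2)*(C.1-A.1) != 0 by apply/eqP.
have dAB : (B.1-A.1)^+2 + (B.2-A.2)^+2 != 0 := nz_of_cross hcr.
have dBC : (C.1-B.1)^+2 + (C.2-B.2)^+2 != 0.
  apply: (@nz_of_cross _ _ _ (A.1-B.1) (A.2-B.2)).
  by have -> : (C.1 - B.1) * (A.2 - B.2) - (C.2 - B.2) * (A.1 - B.1) =
     (B.1-A.1)*(C.2-A.2) - (B.2-A.2)*(C.1-A.1) by ring.
have dCA : (A.1-C.1)^+2 + (A.2-C.2)^+2 != 0.
  apply: (@nz_of_cross _ _ _ (B.1-C.1) (B.2-C.2)).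
  by have -> : (A.1 - C.1) * (B.2 - C.2) - (A.2 - C.2) * (B.1 - C.1) =
     (B.1-A.1)*(C.2-A.2) - (B.2-A.2)*(C.1-A.1) by ring.
have T12 := tangentT ha0 hb0 hu dAB tAB.
have T23 := tangentT ha0 hb0 hu dBC tBC.
have T31 := tangentT ha0 hb0 hu dCA tCA.
have eAB : dot (vsub O A) (vsub O A) = dot (vsub O B) (vsub O B).
  by apply/eqP; rewrite -eqr_sqrt ?dot_ge0 //; apply/eqP.
have eBC : dot (vsub O B) (vsub O B) = dot (vsub O C) (vsub O C).
  by apply/eqP; rewrite -eqr_sqrt ?dot_ge0 //; apply/eqP.
have h2 : (cx O u B)^+2 + (cy O u B)^+2 = (cx O u A)^+2 + (cy O u A)^+2.
  by rewrite !rot_sq eAB.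
have h3 : (cx O u C)^+2 + (cy O u C)^+2 = (cx O u A)^+2 + (cy O u A)^+2.
  by rewrite !rot_sq eAB eBC.
have hcr' := hcr; rewrite -(mulr1 (_ - _)) -hu -(rot_cross O u) in hcr'.
have hZ2 := core_main hb hab (erefl _) h2 h3 hcr' T12 T23 T31.
set Zs := (_ + _ + _ + _) in hZ2.
have hZ : `|Zs| = 2*a*b.
  have hab0 : 0 <= 2*a*b by rewrite !mulr_ge0 ?ler0n ?ltW.
  rewrite -sqrtr_sqr hZ2 -(ger0_norm hab0) -sqrtr_sqr; congr Num.sqrt; ring.
have zH : H.1 = A.1+B.1+C.1-2*O.1 /\ H.2 = A.2+B.2+C.2-2*O.2.
  have zw : (H.1 - (A.1+B.1+C.1-2*O.1))*(C.1-B.1) + (H.2 - (A.2+B.2+C.2-2*O.2))*(C.2-B.2) = 0.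
    transitivity (dot (vsub H A) (vsub C B) - (dot (vsub O C) (vsub O C) - dot (vsub O B) (vsub O B))).
      by rewrite /dot /vsub /=; ring.
    by rewrite o1 eBC subrr subr0.
  have zv : (H.1 - (A.1+B.1+C.1-2*O.1))*(C.1-A.1) + (H.2 - (A.2+B.2+C.2-2*O.2))*(C.2-A.2) = 0.
    transitivity (dot (vsub H B) (vsub C A) - (dot (vsub O C) (vsub O C) - dot (vsub O A) (vsub O A))).
      by rewrite /dot /vsub /=; ring.
    by rewrite o2 eAB eBC subrr subr0.
  have hX : -((B.1-A.1)*(C.2-A.2) - (B.2-A.2)*(C.1-A.1)) != 0 by rewrite oppr_eq0.
  split; apply: subr0_eq; apply: (mul0_l _ hX).
  - transitivity ((C.2-A.2)*((H.1 - (A.1+B.1+C.1-2*O.1))*(C.1-B.1) + (H.2 - (A.2+B.2+C.2-2*O.2))*(C.2-B.2))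
       - (C.2-B.2)*((H.1 - (A.1+B.1+C.1-2*O.1))*(C.1-A.1) + (H.2 - (A.2+B.2+C.2-2*O.2))*(C.2-A.2))); first by ring.
    by rewrite zw zv; ring.
  - transitivity ((C.1-B.1)*((H.1 - (A.1+B.1+C.1-2*O.1))*(C.1-A.1) + (H.2 - (A.2+B.2+C.2-2*O.2))*(C.2-A.2))
       - (C.1-A.1)*((H.1 - (A.1+B.1+C.1-2*O.1))*(C.1-B.1) + (H.2 - (A.2+B.2+C.2-2*O.2))*(C.2-B.2))); first by ring.
    by rewrite zw zv; ring.
case: zH => zH1 zH2.
have eV : dot (vsub A H) (vsub H HA) + Zs =
   t*(dot (vsub O C) (vsub O C) - dot (vsub O B) (vsub O B))
   + (dot (vsub O A) (vsub O A) - dot (vsub O C) (vsub O C))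
   + (dot u u - 1)*(dot (vsub O A) (vsub O A) + dot (vsub A O) (vsub B O) + dot (vsub B O) (vsub C O) + dot (vsub C O) (vsub A O)).
  rewrite /Zs hHA /cx /cy /dot /vsub /= zH1 zH2; ring.
rewrite -eBC -eAB hu !subrr mulr0 mul0r !addr0 in eV.
have hV : dot (vsub A H) (vsub H HA) = - Zs by apply/eqP; rewrite -addr_eq0; apply/eqP.
have hW : dot (vsub C B) (vsub C B) != 0.
  by have -> : dot (vsub C B) (vsub C B) = (C.1-B.1)^+2 + (C.2-B.2)^+2 by rewrite /dot /vsub /=; ring.
have hu1 : dot (vsub A H) (vsub C B) = 0.
  transitivity (- dot (vsub H A) (vsub C B)); first by rewrite /dot /vsub /=; ring.
  by rewrite o1 oppr0.
have hv1 : dot (vsub H HA) (vsub C B) = 0.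
  transitivity (dot (vsub H A) (vsub C B) + dot (vsub A HA) (vsub C B)); first by rewrite /dot /vsub /=; ring.
  by rewrite o1 hf addr0.
have hP := perp2 hW hu1 hv1.
have eD : dist A H * dist H HA = `|dot (vsub A H) (vsub H HA)|.
  rewrite /dist -sqrtrM ?dot_ge0 // hP.
  apply: sqrtr_sqr.
by rewrite /polar_radius eD hV normrN hZ.
Qed.
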